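(* Let $f\in P_k^n$, let $N\in Sep(f)$, and let $x_1,\dots,x_m$ be essential variables of $f$. Suppose there exist constants $c_1,\dots,c_m\in Z_k$ such that $N\cap Ess(f(x_i=c_i))=\emptyset$ for every $i=1,\dots,m$. Then $M\cup N\in Sep(f)$ for every nonempty $M\subseteq\{x_1,\dots,x_m\}$.
   Context: $Z_k=\{0,1,\dots,k-1\}$, $k\ge2$; $P_k^n$ is the set of all maps $f:Z_k^n\to Z_k$ in the variables $x_1,\dots,x_n$. A variable $x_i$ is essential in $f$ if there are $a_1,\dots,a_n,b\in Z_k$ with $f(a_1,\dots,a_i,\dots,a_n)\ne f(a_1,\dots,a_{i-1},b,a_{i+1},\dots,a_n)$; $Ess(f)$ is the set of essential variables. For an essential $x_i$ and $c\in Z_k$, $f(x_i=c)$ is the function obtained by assigning $c$ to $x_i$; $f\succ g$ means $g=f(x_i=c)$ for some essential $x_i$ and $c$, and $\succeq$ is the reflexive-transitive closure of $\succ$ (the elements $g$ with $f\succeq g$ are the subfunctions of $f$). A nonempty set $M\subseteq Ess(f)$ is separable in $f$ if $M=Ess(g)$ for some $g$ with $f\succeq g$; $Sep(f)$ is the set of separable sets of $f$. *)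

(* Defs.v *)
(* Z_k = 'I_k (with 2 <= k as hypothesis), variables x_1..x_n = 'I_n. *)
From mathcomp Require Import all_boot.
Set Implicit Arguments. Unset Strict Implicit. Unset Printing Implicit Defensive.

Definition tup (k n : nat) := {ffun 'I_n -> 'I_k}.
Definition fn (k n : nat) := {ffun tup k n -> 'I_k}.

Definition upd k n (a : tup k n) (i : 'I_n) (b : 'I_k) : tup k n :=
  [ffun j => if j == i then b else a j].

Definition essential k n (f : fn k n) (i : 'I_n) : bool :=
  [exists a : tup k n, exists b : 'I_k, f a != f (upd a i b)].

Definition Ess k n (f : fn k n) : {set 'I_n} := [set i | essential f i].

Definition assign k n (f : fn k n) (i : 'I_n) (c : 'I_k) : fn k n :=
  [ffun a => f (upd a i c)].

Definition succ1 k n (f g : fn k n) : Prop :=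
  exists i c, i \in Ess f /\ g = assign f i c.

Inductive subfun k n (f : fn k n) : fn k n -> Prop :=
  | subfun_refl : subfun f f
  | subfun_step g h : subfun f g -> succ1 g h -> subfun f h.

Definition separable k n (f : fn k n) (M : {set 'I_n}) : Prop :=
  M != set0 /\ M \subset Ess f /\ exists g, subfun f g /\ M = Ess g.

(* Main.v *)
Require Import Defs.
From mathcomp Require Import all_boot.
Set Implicit Arguments. Unset Strict Implicit. Unset Printing Implicit Defensive.

Section S.
Variables k n : nat.
Implicit Types (f g h : fn k n) (d a : tup k n).

Definition rs f (s : seq 'I_n) d : fn k n := foldr (fun i g => assign g i (d i)) f s.
Definition restr f (P : {set 'I_n}) d := rs f (enum P) d.

Lemma rsE f s d a : rs f s d a = f [ffun j => if j \in s then d j else a j].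
Proof.
elim: s a => [|i s IH] a /=.
  by congr (f _); apply/ffunP => j; rewrite !ffunE.
rewrite /assign ffunE IH; congr (f _); apply/ffunP => j; rewrite !ffunE in_cons.
by case: eqP => [->|]; case: (_ \in s).
Qed.

Lemma restrE f P d a : restr f P d a = f [ffun j => if j \in P then d j else a j].
Proof. by rewrite rsE; congr (f _); apply/ffunP => j; rewrite !ffunE mem_enum. Qed.

Lemma assign_ness g i c : i \notin Ess g -> assign g i c = g.
Proof.
rewrite inE /essential => /existsPn H; apply/ffunP => a; rewrite ffunE.
have := H a => /existsPn/(_ c); by rewrite negbK => /eqP.
Qed.

Lemma subfun_assign f g i c : subfun f g -> subfun f (assign g i c).
Proof.
move=> H; case: (boolP (i \in Ess g)) => Hi.
  by apply: subfun_step H _; exists i, c.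
by rewrite assign_ness.
Qed.

Lemma subfun_restr f P d : subfun f (restr f P d).
Proof.
rewrite /restr; elim: (enum P) => [|i s IH] /=; first exact: subfun_refl.
exact: subfun_assign.
Qed.

Lemma Ess_restr f P d : Ess (restr f P d) \subset Ess f :&: ~: P.
Proof.
apply/subsetP => i; rewrite !inE /essential => /existsP[a /existsP[b Hab]].
rewrite !restrE in Hab.
case: (boolP (i \in P)) => HiP.
  move: Hab; set u := [ffun _ => _]; set v := [ffun _ => _].
  suff -> : u = v by rewrite eqxx.
  by apply/ffunP => j; rewrite /u /v !ffunE; case: eqP => [->|]; rewrite ?HiP.
rewrite andbT; apply/existsP; exists [ffun j => if j \in P then d j else a j].
apply/existsP; exists b; move: Hab; congr (_ != f _).
apply/ffunP => j; rewrite !ffunE; case: eqP => [->|//]; by rewrite (negbTE HiP).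
Qed.

Lemma restr_comp f P Q d : restr (restr f P d) Q d = restr f (P :|: Q) d.
Proof.
apply/ffunP => a; rewrite !restrE; congr (f _); apply/ffunP => j; rewrite !ffunE in_setU.
by case: (j \in P); case: (j \in Q).
Qed.

Lemma restr_ness g (P : {set 'I_n}) d : P \subset ~: Ess g -> restr g P d = g.
Proof.
move=> HP; rewrite /restr.
have : all (fun j => j \notin Ess g) (enum P).
  apply/allP => j; rewrite mem_enum => Hj; by have := subsetP HP j Hj; rewrite inE.
elim: (enum P) => [|i s IH] //= /andP[Hi Hs].
by rewrite IH // assign_ness.
Qed.

Lemma subfun_ex f g (d0 : tup k n) : subfun f g -> exists S d, g = restr f S d.
Proof.
elim => [|g' h _ [S [d ->]] [i [c [Hi ->]]]].
  exists set0, d0; apply/ffunP => a; rewrite restrE; congr (f _).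
  by apply/ffunP => j; rewrite !ffunE inE.
have HiS : i \notin S.
  by have := subsetP (Ess_restr f S d) i Hi; rewrite !inE => /andP[].
exists (i |: S), (upd d i c); apply/ffunP => a.
rewrite ffunE !restrE; congr (f _); apply/ffunP => j; rewrite !ffunE !inE.
by case: eqP => [->|]; rewrite ?(negbTE HiS).
Qed.

End S.

Theorem lemma4 (k n : nat) (hk : 2 <= k) (f : fn k n) (N : {set 'I_n})
  (m : nat) (x : 'I_m -> 'I_n) (c : 'I_m -> 'I_k) :
  separable f N ->
  (forall i, x i \in Ess f) ->
  (forall i, N :&: Ess (assign f (x i) (c i)) = set0) ->
  forall M : {set 'I_n}, M != set0 -> M \subset [set x i | i : 'I_m] ->
    separable f (M :|: N).
Proof.
move=> [N0 [NE [g [Hg HN]]]] _ Hc M M0 MX.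
have k0 : 0 < k by apply: leq_trans hk.
have [S [d Hgd]] := subfun_ex [ffun _ => Ordinal k0] Hg.
have SN : S \subset ~: N.
  apply/subsetP => j Hj; rewrite inE HN; apply/negP => Hj'.
  by have := subsetP (Ess_restr f S d) j; rewrite -Hgd => /(_ Hj'); rewrite !inE Hj andbF.
have Hh : restr f (~: N) d = g.
  have R := restr_ness d (_ : ~: N \subset ~: Ess g).
  rewrite -[in RHS]R; last by rewrite HN.
  rewrite [in RHS]Hgd restr_comp.
  by congr restr; apply/setP => j; rewrite !inE; case: (boolP (j \in S)) => // /(subsetP SN); rewrite inE => ->.
set g' := restr f (~: (M :|: N)) d.
have Hh' : restr g' (M :\: N) d = g.
  rewrite restr_comp -Hh; congr restr; apply/setP => j; rewrite !inE.
  by case: (j \in M); case: (j \in N).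
have E1 := Ess_restr f (~: (M :|: N)) d.
have NE' : N \subset Ess g'.
  apply/subsetP => j Hj; have := subsetP (Ess_restr g' (M :\: N) d) j.
  by rewrite Hh' -HN => /(_ Hj); rewrite inE => /andP[].
have ME' : M \subset Ess g'.
  apply/subsetP => y Hy; case: (boolP (y \in N)) => HyN; first exact: (subsetP NE').
  have /imsetP[i _ Hyi] := subsetP MX y Hy.
  apply/negPn/negP => Hne.
  have E : g = restr (assign f y (c i)) (~: N) d.
    rewrite -Hh'; apply/ffunP => a.
    rewrite restrE -(assign_ness (c i) Hne) {1}/assign ffunE /g' restrE restrE /assign ffunE.
    congr (f _); apply/ffunP => j; rewrite !ffunE !inE.
    case: eqP => [->|_]; first by rewrite Hy.
    by case: (j \in M); case: (j \in N).
  have : N \subset Ess (assign f (x i) (c i)).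
    rewrite -Hyi HN E; apply: subset_trans (Ess_restr _ _ _) _; exact: subsetIl.
  move=> Hsub; move: (Hc i); rewrite (setIidPl Hsub) => HN0.
  by move: N0; rewrite HN0 eqxx.
split; first by apply: contra M0; rewrite setU_eq0 => /andP[].
split.
  rewrite subUset NE andbT; apply: subset_trans ME' _.
  by apply: subset_trans E1 _; exact: subsetIl.
exists g'; split; first exact: subfun_restr.
apply/eqP; rewrite eqEsubset subUset ME' NE' andbT.
apply: subset_trans E1 _; apply/subsetP => j; rewrite !inE negbK; by case/andP.
Qed.
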